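(* Let $X$ be a pre-ordered Banach space with a closed cone, and let $X'$ be its dual, ordered by the dual cone $X'_+=\{f\in X': f(x)\ge 0 \text{ for all } x\in X_+\}$. Let $\alpha>0$. Then: (1) $X'$ is approximately $\alpha$-sum-conormal if and only if $X'$ is $\alpha$-sum-conormal; (2) $X'$ is approximately $\alpha$-max-conormal if and only if $X'$ is $\alpha$-max-conormal; (3) $X'$ is approximately $\alpha$-absolutely conormal if and only if $X'$ is $\alpha$-absolutely conormal; (4) $X'$ is approximately $\alpha$-conormal if and only if $X'$ is $\alpha$-conormal.
   Context: A cone in a real Banach space $X$ is a subset $C$ with $C+C\subseteq C$ and $\lambda C\subseteq C$ for all $\lambda\ge0$. A pre-ordered Banach space is a real Banach space $X$ together with a cone $X_+$ (not assumed proper), with $x\ge y$ meaning $x-y\in X_+$. For a pre-ordered Banach space $Z$ with closed cone and $\alpha>0$: $Z$ is $\alpha$-sum-conormal if every $x\in Z$ can be written $x=a-b$ with $a,b\in Z_+$ and $\|a\|+\|b\|\le\alpha\|x\|$; approximately $\alpha$-sum-conormal if for every $x$ and $\varepsilon>0$ there are $a,b\in Z_+$ with $x=a-b$ and $\|a\|+\|b\|<\alpha\|x\|+\varepsilon$. $Z$ is $\alpha$-max-conormal (resp. approximately) if the same holds with $\max\{\|a\|,\|b\|\}$ in place of $\|a\|+\|b\|$. $Z$ is $\alpha$-absolutely conormal if for every $x$ there is $a\in Z_+$ with $-x\le a$, $x\le a$ and $\|a\|\le\alpha\|x\|$; approximately $\alpha$-absolutely conormal if for every $x$ and $\varepsilon>0$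 there is $a\in Z_+$ with $\pm x\le a$ and $\|a\|<\alpha\|x\|+\varepsilon$. $Z$ is $\alpha$-conormal if for every $x$ there is $a\in Z_+$ with $0\le a$, $x\le a$ and $\|a\|\le\alpha\|x\|$; approximately $\alpha$-conormal if for every $x$ and $\varepsilon>0$ there is $a$ with $0\le a$, $x\le a$, $\|a\|<\alpha\|x\|+\varepsilon$. *)

(* Defs.v *)
From HB Require Import structures.
From mathcomp Require Import all_boot all_order all_algebra.
From mathcomp Require Import all_classical all_reals all_analysis.
Set Implicit Arguments. Unset Strict Implicit. Unset Printing Implicit Defensive.
Import Order.TTheory GRing.Theory Num.Theory.
Import numFieldNormedType.Exports.
Local Open Scope classical_set_scope.
Local Open Scope ring_scope.

Definition is_cone (R : realType) (V : lmodType R) (C : set V) : Prop :=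
  (forall x y, C x -> C y -> C (x + y)) /\
  (forall (l : R) x, 0 <= l -> C x -> C (l *: x)).

Definition ple (Z : zmodType) (P : set Z) (x y : Z) : Prop := P (y - x).

(** Conormality notions for a pre-ordered normed space presented as
    (carrier [S] inside an ambient zmodType [Z], norm [N], cone [P]).
    All elements range over [S]; the cone is assumed to be a subset of [S]. *)
Section Conormality.
Variables (R : realType) (Z : zmodType) (S : set Z) (N : Z -> R) (P : set Z)
          (alpha : R).

Definition sum_conormal : Prop :=
  forall x, S x -> exists a b, [/\ S a /\ S b, P a /\ P b, x = a - b &
     N a + N b <= alpha * N x].

Definition approx_sum_conormal : Prop :=
  forall x, S x -> forall eps : R, 0 < eps -> exists a b, [/\ S a /\ S b, P a /\ P b,
     x = a - b & N a + N b < alpha * N x + eps].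

Definition max_conormal : Prop :=
  forall x, S x -> exists a b, [/\ S a /\ S b, P a /\ P b, x = a - b &
     Num.max (N a) (N b) <= alpha * N x].

Definition approx_max_conormal : Prop :=
  forall x, S x -> forall eps : R, 0 < eps -> exists a b, [/\ S a /\ S b, P a /\ P b,
     x = a - b & Num.max (N a) (N b) < alpha * N x + eps].

Definition abs_conormal : Prop :=
  forall x, S x -> exists a, [/\ S a, P a, ple P (- x) a, ple P x a &
     N a <= alpha * N x].

Definition approx_abs_conormal : Prop :=
  forall x, S x -> forall eps : R, 0 < eps -> exists a, [/\ S a, P a,
     ple P (- x) a, ple P x a & N a < alpha * N x + eps].

Definition conormal : Prop :=
  forall x, S x -> exists a, [/\ S a, ple P 0 a, ple P x a &
     N a <= alpha * N x].

Definition approx_conormal : Prop :=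
  forall x, S x -> forall eps : R, 0 < eps -> exists a, [/\ S a, ple P 0 a,
     ple P x a & N a < alpha * N x + eps].

End Conormality.

(** The (topological) dual X' of a normed space X, realized inside the
    function space X -> R: continuous linear functionals. *)
Definition dual_space (R : realType) (X : normedModType R) : set (X -> R) :=
  [set f | (forall (a : R) (x y : X), f (a *: x + y) = a * f x + f y)
           /\ continuous f].

Definition dual_norm (R : realType) (X : normedModType R) (f : X -> R) : R :=
  sup [set `|f x| | x in [set x : X | `|x| <= 1]].

Definition dual_cone (R : realType) (X : normedModType R) (C : set X)
  : set (X -> R) :=
  [set f | dual_space f /\ forall x, C x -> 0 <= f x].

(* Main.v *)
Require Import Defs.
From HB Require Import structures.
From mathcomp Require Import all_boot all_order all_algebra.
From mathcomp Require Import all_classical all_reals all_analysis.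
From mathcomp Require Import ring lra.
Import Order.TTheory GRing.Theory Num.Theory.
Import numFieldNormedType.Exports.
Local Open Scope classical_set_scope.
Local Open Scope ring_scope.
Section U.
Variable R : realType.

Lemma ucvg (U : set_system nat) (UU : UltraFilter U) (u : nat -> R) (K : R) :
  (forall n, `|u n| <= K) -> u @ U --> lim (u @ U).
Proof.
move=> uK.
suff : exists p : R, u @ U --> p.
  move=> [p hp].
  have FF : ProperFilter U by exact: ultra_proper.
  by rewrite (cvg_lim (@norm_hausdorff _ _) hp).
have := @segment_compact R (-K) K (u @ U) _.
case.
  apply: (@filterS nat U _ setT); last exact: filterT.
  move=> n _ /=; rewrite (@in_itv _ R) /= -ler_norml; exact: uK.
move=> p [_ clp].
exists p => V nV /=.
have [//|Uc] := in_ultra_setVsetC (u @^-1` V) UU.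
have [n [/= h1 h2]] := clp (~` V) V Uc nV.
by [].
Qed.

Lemma ulim_le (U : set_system nat) (UU : UltraFilter U) (hU : \oo `<=` U)
   (u : nat -> R) (l c : R) :
  u @ U --> l -> (forall n, u n <= c + n.+1%:R^-1) -> l <= c.
Proof.
move=> hl hu; apply/ler_addgt0Pr => e e0.
apply: (closed_cvg _ (@closed_le R (c + e)) _ _ hl).
apply: hU.
near=> n => /=.
apply: (le_trans (hu n)); rewrite lerD2l.
near: n.
have := near_infty_natSinv_lt (PosNum e0).
by apply: filterS => n /ltW.
Unshelve. all: by end_near.
Qed.
End U.

Section S.
Variables (R : realType) (X : normedModType R).
Definition lin (f : X -> R) := forall (a : R) (x y : X), f (a *: x + y) = a * f x + f y.
Lemma lin0 f : lin f -> f 0 = 0.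
Proof. move=> h; have := h 1 0 0; rewrite scaler0 addr0 mul1r -{1}[f 0]addr0 => /addrI /esym //. Qed.
Lemma linZ f a x : lin f -> f (a *: x) = a * f x.
Proof. move=> h; have := h a x 0; by rewrite addr0 lin0 // addr0. Qed.
Lemma linD f x y : lin f -> f (x + y) = f x + f y.
Proof. move=> h; have := h 1 x y; by rewrite scale1r mul1r. Qed.
Lemma linN f x : lin f -> f (- x) = - f x.
Proof. move=> h; by rewrite -scaleN1r linZ // mulN1r. Qed.
Lemma bnd f : lin f -> continuous f -> exists K : R, forall z : X, `|z| <= 1 -> `|f z| <= K.
Proof.
move=> hl hc.
have := @cvgr_dist_lt _ _ _ (nbhs (0:X)) (nbhs_filter _) f (f 0) (hc 0) 1 ltr01.
rewrite lin0 // => H.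
have [e /= e0 he] := (nbhs_ballP _ _).1 H.
exists (2 / e) => z z1.
have : `|f ((e / 2) *: z)| < 1.
  have := he ((e / 2) *: z). rewrite sub0r normrN. apply.
  rewrite -ball_normE /ball_ /= add0r normrN normrZ ger0_norm; last by rewrite divr_ge0 // ltW.
  apply: (le_lt_trans (ler_wpM2l _ z1)); first by rewrite divr_ge0 // ltW.
  by rewrite mulr1 ltr_pdivrMr // ltr_pMr // ltr1n.
rewrite linZ // normrM ger0_norm; last by rewrite divr_ge0 // ltW.
move=> h.
rewrite -(@ler_pM2l _ (e / 2)) ?divr_gt0 //.
apply: (le_trans (ltW h)).
have -> : e / 2 * (2 / e) = 1 by field; rewrite gt_eqF.
by [].
Qed.

Lemma D1 (f : X -> R) z : dual_space f -> `|z| <= 1 -> `|f z| <= dual_norm f.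
Proof.
move=> [hl hc] z1; have [K hK] := @bnd f hl hc.
apply: ub_le_sup; last by exists z.
by exists K => r [x hx <-]; apply: hK.
Qed.

Lemma D2 (f : X -> R) c : (forall z : X, `|z| <= 1 -> `|f z| <= c) -> dual_norm f <= c.
Proof.
move=> h; apply: ge_sup; first by exists `|f 0|, 0 => //=; rewrite normr0.
by move=> r [x hx <-]; apply: h.
Qed.

Lemma D0 (f : X -> R) : dual_space f -> 0 <= dual_norm f.
Proof. move=> hf; apply: le_trans (@D1 f 0 hf _) => //; rewrite normr0 //. Qed.

Lemma D3 (f : X -> R) y : dual_space f -> `|f y| <= dual_norm f * `|y|.
Proof.
move=> hf; have [y0|y0] := eqVneq y 0.
  by rewrite y0 lin0 ?normr0 ?mulr0 //; case: hf.
have ny : 0 < `|y| by rewrite normr_gt0.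
have := @D1 f (`|y|^-1 *: y) hf.
rewrite normrZ ger0_norm ?invr_ge0 ?(ltW ny) // mulVf ?gt_eqF // lexx => /(_ isT).
rewrite linZ; last by case: hf.
rewrite normrM ger0_norm ?invr_ge0 ?(ltW ny) // => h.
by rewrite -ler_pdivrMr // mulrC.
Qed.

Lemma ds_add (f g : X -> R) : dual_space f -> dual_space g -> dual_space (f + g).
Proof.
move=> [hf cf] [hg cg]; split.
  by move=> a x y; rewrite !fctE hf hg; ring.
by move=> x; apply: continuousD; [exact: cf|exact: cg].
Qed.

Lemma ds_opp (f : X -> R) : dual_space f -> dual_space (- f).
Proof.
move=> [hf cf]; split.
  by move=> a x y; rewrite !fctE hf; ring.
by move=> x; apply: continuousN; exact: cf.
Qed.

Lemma ulim_dual (U : set_system nat) (UU : UltraFilter U) (fs : nat -> X -> R) (M : R) :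
  (forall n, dual_space (fs n)) -> (forall n, dual_norm (fs n) <= M) ->
  exists g, dual_space g /\ (forall y, fs^~ y @ U --> g y).
Proof.
move=> hds hM.
suff : dual_space (fun y => lim (fs^~ y @ U)) /\ (forall y, fs^~ y @ U --> lim (fs^~ y @ U)).
  by move=> h; exists (fun y => lim (fs^~ y @ U)).
have FF : ProperFilter U by exact: ultra_proper.
have M0 : 0 <= M by apply: le_trans (hM 0%N); apply: D0.
have bd : forall y n, `|fs n y| <= M * `|y|.
  move=> y n; apply: le_trans (@D3 (fs n) y (hds n)) _.
  by rewrite ler_wpM2r.
have cv : forall y, fs^~ y @ U --> lim (fs^~ y @ U).
  by move=> y; exact: (@ucvg R U UU (fs^~ y) _ (bd y)).
set g := fun y => lim (fs^~ y @ U).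
have gb : forall y, `|g y| <= M * `|y|.
  move=> y; apply: (closed_cvg _ (@closed_le R (M * `|y|)) _ _ (cvg_norm (cv y))).
  by apply: (@filterS nat U _ setT); [move=> n _; exact: bd|exact: filterT].
have gl : lin g.
  move=> a x y.
  have : (fun n => fs n (a *: x + y)) = (fun n => a * fs n x + fs n y).
    by apply: funext => n; case: (hds n) => h _; rewrite h.
  move=> e; rewrite /g e; apply: cvg_lim => //.
  apply: cvgD; last exact: cv.
  exact: cvgMl_tmp (cv x).
split => //; split => // x.
apply/cvgrPdist_lt => e e0.
have e1 : 0 < e / (M + 1) by rewrite divr_gt0 // ltr_wpDl.
have := @cvgr_dist_lt _ _ _ (nbhs x) (nbhs_filter _) id x cvg_id _ e1.
apply: filterS => t ht.
have -> : g x - g t = g (x - t).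
  by rewrite linD // linN.
apply: le_lt_trans (gb _) _.
have : M * `|x - t| <= (M + 1) * `|x - t| by rewrite ler_wpM2r // lerDl.
move/le_lt_trans; apply.
by rewrite mulrC -ltr_pdivlMr // ltr_wpDl.
Qed.

Lemma ulim_cone (C : set X) (U : set_system nat) (UU : UltraFilter U)
  (fs : nat -> X -> R) (g h : X -> R) :
  dual_space g -> dual_space h -> (forall y, fs^~ y @ U --> g y) ->
  (forall n, dual_cone C (fs n + h)) -> dual_cone C (g + h).
Proof.
move=> Sg Sh cv hP.
have FF : ProperFilter U by exact: ultra_proper.
split; first exact: ds_add.
move=> c Cc; rewrite fctE.
apply: (closed_cvg _ (@closed_ge R 0) _ _ (cvgD (cv c) (cvg_cst (h c)))).
apply: (@filterS nat U _ setT); last exact: filterT.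
by move=> n _ /=; have [_ /(_ c Cc)] := hP n; rewrite fctE.
Qed.

Lemma nb1 (U : set_system nat) (UU : UltraFilter U) (hU : \oo `<=` U)
  (fs : nat -> X -> R) (g : X -> R) (c : R) :
  (forall y, fs^~ y @ U --> g y) -> (forall n, dual_space (fs n)) ->
  (forall n, dual_norm (fs n) < c + n.+1%:R^-1) -> dual_norm g <= c.
Proof.
move=> cv Sf hb.
have FF : ProperFilter U by exact: ultra_proper.
apply: D2 => z z1.
apply: (@ulim_le R U UU hU _ _ c (cvg_norm (cv z))) => n.
exact/ltW/(le_lt_trans (@D1 (fs n) z (Sf n) z1) (hb n)).
Qed.

Lemma nb2 (U : set_system nat) (UU : UltraFilter U) (hU : \oo `<=` U)
  (fs hs : nat -> X -> R) (g k : X -> R) (c : R) :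
  (forall y, fs^~ y @ U --> g y) -> (forall y, hs^~ y @ U --> k y) ->
  (forall n, dual_space (fs n)) -> (forall n, dual_space (hs n)) ->
  (forall n, dual_norm (fs n) + dual_norm (hs n) < c + n.+1%:R^-1) ->
  dual_norm g + dual_norm k <= c.
Proof.
move=> cv cw Sf Sh hb.
have FF : ProperFilter U by exact: ultra_proper.
have key : forall y z : X, `|y| <= 1 -> `|z| <= 1 -> `|g y| + `|k z| <= c.
  move=> y z y1 z1.
  apply: (@ulim_le R U UU hU _ _ c (cvgD (cvg_norm (cv y)) (cvg_norm (cw z)))) => n.
  apply/ltW/(le_lt_trans _ (hb n)).
  by rewrite fctE; apply: lerD; apply: D1.
have : dual_norm k <= c - dual_norm g; last by rewrite lerBrDl.
apply: D2 => z z1; rewrite lerBrDl addrC.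
have : dual_norm g <= c - `|k z|; last by rewrite lerBrDl.
by apply: D2 => y y1; rewrite lerBrDl addrC; apply: key.
Qed.
End S.
Arguments D0 {R X f}.
Arguments ds_opp {R X f}.
Arguments ulim_dual {R X U} UU {fs M}.
Arguments ulim_cone {R X C U} UU {fs g h}.
Arguments nb1 {R X U} UU hU {fs g c}.
Arguments nb2 {R X U} UU hU {fs hs g k c}.

Theorem lemma3p8 (R : realType) (X : completeNormedModType R) (C : set X)
  (hcone : is_cone C) (hclosed : closed C) (alpha : R) (halpha : 0 < alpha) :
  [/\ approx_sum_conormal (@dual_space R X) (@dual_norm R X) (dual_cone C) alpha
        <-> sum_conormal (@dual_space R X) (@dual_norm R X) (dual_cone C) alpha,
      approx_max_conormal (@dual_space R X) (@dual_norm R X) (dual_cone C) alpha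
        <-> max_conormal (@dual_space R X) (@dual_norm R X) (dual_cone C) alpha,
      approx_abs_conormal (@dual_space R X) (@dual_norm R X) (dual_cone C) alpha
        <-> abs_conormal (@dual_space R X) (@dual_norm R X) (dual_cone C) alpha &
      approx_conormal (@dual_space R X) (@dual_norm R X) (dual_cone C) alpha
        <-> conormal (@dual_space R X) (@dual_norm R X) (dual_cone C) alpha].
Proof.
have [U [UU hU]] := ultraFilterLemma eventually_filter.
have FF : ProperFilter U by exact: ultra_proper.
have ep : forall n : nat, 0 < n.+1%:R^-1 :> R by move=> n; rewrite invr_gt0 ltr0Sn.
have e1 : forall n : nat, n.+1%:R^-1 <= 1 :> R.
  by move=> n; rewrite invf_le1 ?ltr0Sn // ler1n.
have S0 : dual_space (0 : X -> R).
  split; first by move=> a x y; rewrite /GRing.zero /= mulr0 addr0.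
  by move=> x; exact: cvg_cst.
split; split.
-
  move=> hA x Sx.
  have : forall n : nat, exists ab : (X -> R) * (X -> R),
    [/\ dual_space ab.1 /\ dual_space ab.2, dual_cone C ab.1 /\ dual_cone C ab.2,
        x = ab.1 - ab.2 & dual_norm ab.1 + dual_norm ab.2 < alpha * dual_norm x + n.+1%:R^-1].
    by move=> n; have [a [b h]] := hA x Sx _ (ep n); exists (a, b).
  move/choice => [ab hab].
  set M := alpha * dual_norm x + 1.
  have bf : forall n, dual_norm (ab n).1 <= M.
    move=> n; have [[S1 S2] _ _ h] := hab n.
    have := D0 S2; move: h (e1 n); rewrite /M; move: (n.+1%:R^-1) => t; lra.
  have bh : forall n, dual_norm (ab n).2 <= M.
    move=> n; have [[S1 S2] _ _ h] := hab n.
    have := D0 S1; move: h (e1 n); rewrite /M; move: (n.+1%:R^-1) => t; lra.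
  have Sf : forall n, dual_space (ab n).1 by move=> n; have [[]] := hab n.
  have Sh : forall n, dual_space (ab n).2 by move=> n; have [[]] := hab n.
  have [g [Sg cg]] := ulim_dual UU Sf bf.
  have [k [Sk ck]] := ulim_dual UU Sh bh.
  exists g, k; split => //.
  + split.
      rewrite -[g]addr0; apply: (ulim_cone UU Sg S0 cg).
      by move=> n; rewrite addr0; have [_ []] := hab n.
    rewrite -[k]addr0; apply: (ulim_cone UU Sk S0 ck).
    by move=> n; rewrite addr0; have [_ []] := hab n.
  + apply: funext => y; rewrite fctE.
    have : (fun n => (ab n).1 y) = (fun n => x y + (ab n).2 y).
      apply: funext => n; have [_ _ -> _] := hab n.
      by rewrite fctE subrK.
    move=> e.
    have h1 : (fun n => (ab n).1 y) @ U --> x y + k y.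
      by rewrite e; apply: cvgD; [exact: cvg_cst|exact: ck].
    have q1 := cvg_lim (@norm_hausdorff _ _) (cg y).
    have q2 := cvg_lim (@norm_hausdorff _ _) h1.
    by rewrite -q1 q2 addrK.
  + apply: (nb2 UU hU cg ck Sf Sh) => n; by have [] := hab n.
-
  move=> hE x Sx e e0; have [a [b [h1 h2 h3 h4]]] := hE x Sx.
  by exists a, b; split => //; apply: le_lt_trans h4 _; rewrite ltrDl.
-
  move=> hA x Sx.
  have : forall n : nat, exists ab : (X -> R) * (X -> R),
    [/\ dual_space ab.1 /\ dual_space ab.2, dual_cone C ab.1 /\ dual_cone C ab.2,
        x = ab.1 - ab.2 & Num.max (dual_norm ab.1) (dual_norm ab.2) < alpha * dual_norm x + n.+1%:R^-1].
    by move=> n; have [a [b h]] := hA x Sx _ (ep n); exists (a, b).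
  move/choice => [ab hab].
  set M := alpha * dual_norm x + 1.
  have bf : forall n, dual_norm (ab n).1 < alpha * dual_norm x + n.+1%:R^-1.
    by move=> n; have [_ _ _] := hab n; rewrite gt_max => /andP[].
  have bh : forall n, dual_norm (ab n).2 < alpha * dual_norm x + n.+1%:R^-1.
    by move=> n; have [_ _ _] := hab n; rewrite gt_max => /andP[].
  have bf' : forall n, dual_norm (ab n).1 <= M.
    by move=> n; have := bf n; have := e1 n; rewrite /M; move: (n.+1%:R^-1) => t; lra.
  have bh' : forall n, dual_norm (ab n).2 <= M.
    by move=> n; have := bh n; have := e1 n; rewrite /M; move: (n.+1%:R^-1) => t; lra.
  have Sf : forall n, dual_space (ab n).1 by move=> n; have [[]] := hab n.
  have Sh : forall n, dual_space (ab n).2 by move=> n; have [[]] := hab n.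
  have [g [Sg cg]] := ulim_dual UU Sf bf'.
  have [k [Sk ck]] := ulim_dual UU Sh bh'.
  exists g, k; split => //.
  + split.
      rewrite -[g]addr0; apply: (ulim_cone UU Sg S0 cg).
      by move=> n; rewrite addr0; have [_ []] := hab n.
    rewrite -[k]addr0; apply: (ulim_cone UU Sk S0 ck).
    by move=> n; rewrite addr0; have [_ []] := hab n.
  + apply: funext => y; rewrite fctE.
    have : (fun n => (ab n).1 y) = (fun n => x y + (ab n).2 y).
      apply: funext => n; have [_ _ -> _] := hab n.
      by rewrite fctE subrK.
    move=> e.
    have h1 : (fun n => (ab n).1 y) @ U --> x y + k y.
      by rewrite e; apply: cvgD; [exact: cvg_cst|exact: ck].
    have q1 := cvg_lim (@norm_hausdorff _ _) (cg y).
    have q2 := cvg_lim (@norm_hausdorff _ _) h1.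
    by rewrite -q1 q2 addrK.
  + by rewrite ge_max (nb1 UU hU cg Sf bf) (nb1 UU hU ck Sh bh).
- move=> hE x Sx e e0; have [a [b [h1 h2 h3 h4]]] := hE x Sx.
  by exists a, b; split => //; apply: le_lt_trans h4 _; rewrite ltrDl.
-
  move=> hA x Sx.
  have : forall n : nat, exists a : X -> R,
    [/\ dual_space a, dual_cone C a, ple (dual_cone C) (- x) a, ple (dual_cone C) x a &
        dual_norm a < alpha * dual_norm x + n.+1%:R^-1].
    by move=> n; have [a h] := hA x Sx _ (ep n); exists a.
  move/choice => [ab hab].
  set M := alpha * dual_norm x + 1.
  have bf : forall n, dual_norm (ab n) < alpha * dual_norm x + n.+1%:R^-1.
    by move=> n; have [] := hab n.
  have bf' : forall n, dual_norm (ab n) <= M.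
    by move=> n; have := bf n; have := e1 n; rewrite /M; move: (n.+1%:R^-1) => t; lra.
  have Sf : forall n, dual_space (ab n) by move=> n; have [] := hab n.
  have [g [Sg cg]] := ulim_dual UU Sf bf'.
  exists g; split => //.
  + rewrite -[g]addr0; apply: (ulim_cone UU Sg S0 cg).
    by move=> n; rewrite addr0; have [] := hab n.
  + apply: (ulim_cone UU Sg (ds_opp (ds_opp Sx)) cg).
    by move=> n; have [] := hab n.
  + apply: (ulim_cone UU Sg (ds_opp Sx) cg).
    by move=> n; have [] := hab n.
  + exact: (nb1 UU hU cg Sf bf).
- move=> hE x Sx e e0; have [a [h1 h2 h3 h4 h5]] := hE x Sx.
  by exists a; split => //; apply: le_lt_trans h5 _; rewrite ltrDl.
-
  move=> hA x Sx.
  have : forall n : nat, exists a : X -> R,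
    [/\ dual_space a, ple (dual_cone C) 0 a, ple (dual_cone C) x a &
        dual_norm a < alpha * dual_norm x + n.+1%:R^-1].
    by move=> n; have [a h] := hA x Sx _ (ep n); exists a.
  move/choice => [ab hab].
  set M := alpha * dual_norm x + 1.
  have bf : forall n, dual_norm (ab n) < alpha * dual_norm x + n.+1%:R^-1.
    by move=> n; have [] := hab n.
  have bf' : forall n, dual_norm (ab n) <= M.
    by move=> n; have := bf n; have := e1 n; rewrite /M; move: (n.+1%:R^-1) => t; lra.
  have Sf : forall n, dual_space (ab n) by move=> n; have [] := hab n.
  have [g [Sg cg]] := ulim_dual UU Sf bf'.
  exists g; split => //.
  + apply: (ulim_cone UU Sg (ds_opp S0) cg).
    by move=> n; have [] := hab n.
  + apply: (ulim_cone UU Sg (ds_opp Sx) cg).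
    by move=> n; have [] := hab n.
  + exact: (nb1 UU hU cg Sf bf).
- move=> hE x Sx e e0; have [a [h1 h2 h3 h4]] := hE x Sx.
  by exists a; split => //; apply: le_lt_trans h4 _; rewrite ltrDl.
Qed.
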